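(* Let $(C,\chi)$ be a Hopf heap and $x\in C$ a group-like element. Then $\mathrm{H}_x(C)\cong\mathrm{Tn}^r C\cong\mathrm{Tn}^l C$ as bialgebras, via $a\mapsto\tau_x^a$ (with inverse $\tau_a^b\mapsto[x,a,b]$) and $a\mapsto\sigma^a_x$ respectively. Consequently $\mathrm{Tn}^r C$ and $\mathrm{Tn}^l C$ are Hopf algebras.
   Context: Work over a field $\mathbb{F}$; coalgebras coassociative, counital, nonzero, Sweedler notation; $C^{\mathrm{co}}$ co-opposite. A Hopf heap is a coalgebra $C$ with a coalgebra map $\chi:C\otimes C^{\mathrm{co}}\otimes C\to C$, $a\otimes b\otimes c\mapsto[a,b,c]$, with $[[a,b,c],d,e]=[a,b,[c,d,e]]$ and $\sum[c_{(1)},c_{(2)},a]=\sum[a,c_{(1)},c_{(2)}]=\varepsilon(c)a$. An element $x$ is group-like if $\Delta(x)=x\otimes x$, $\varepsilon(x)=1$. $\mathrm{H}_x(C)$ is the Hopf algebra with underlying coalgebra $C$, unit $x$, product $ab=[a,x,b]$ and antipode $S(a)=[x,a,x]$. $\mathrm{Tn}^rC$ is the span of right translations $\tau_a^b:c\mapsto[c,a,b]$, a bialgebra with product $\tau_a^b\tau_c^d=\tau_c^d\circ\tau_a^b=\tau_a^{[b,c,d]}$, unit $\mathrm{id}_C$, coproduct $\Delta(\tau_a^b)=\sum\tau_{a_{(2)}}^{b_{(1)}}\otimes\tau_{a_{(1)}}^{b_{(2)}}$, counit $\varepsilon(\tau_a^b)=\varepsilon(a)\varepsilon(b)$. $\mathrm{Tn}^lC$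 is the span of left translations $\sigma^a_b:c\mapsto[a,b,c]$, a bialgebra with product $\sigma^a_b\sigma^c_d=\sigma^a_b\circ\sigma^c_d=\sigma^{[a,b,c]}_d$, unit $\mathrm{id}_C$, coproduct $\Delta(\sigma^a_b)=\sum\sigma^{a_{(1)}}_{b_{(2)}}\otimes\sigma^{a_{(2)}}_{b_{(1)}}$, counit $\varepsilon(\sigma^a_b)=\varepsilon(a)\varepsilon(b)$. *)

(* Defs.v *)
From HB Require Import structures.
From mathcomp Require Import all_boot all_order all_algebra.
From mathcomp Require Import boolp classical_sets functions.
From Stdlib Require Import ClassicalEpsilon.

Set Implicit Arguments.
Unset Strict Implicit.
Unset Printing Implicit Defensive.
Import GRing.Theory.
Local Open Scope ring_scope.

Section HopfHeaps.
Variable F : fieldType.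

Definition lin (U W : lmodType F) (f : U -> W) : Prop :=
  forall (a : F) (u v : U), f (a *: u + v) = a *: f u + f v.

Definition bilin (U V W : lmodType F) (b : U -> V -> W) : Prop :=
  (forall v, lin (fun u => b u v)) /\ (forall u, lin (b u)).

Definition trilin (U V W X : lmodType F) (t : U -> V -> W -> X) : Prop :=
  [/\ forall v w, lin (fun u => t u v w),
      forall u w, lin (fun v => t u v w) &
      forall u v, lin (t u v)].

(* Tensors.  An element of U (x) V is represented by a finite formal   *)
(* sum  sum_i u_i (x) v_i  (a list of pairs); two such sums are equal   *)
(* in U (x) V iff every bilinear map out of U x V takes the same value  *)
(* on them (universal property of the tensor product).  Same for three  *)
(* factors with trilinear maps.                                         *)
Definition teq2 (U V : lmodType F) (s t : seq (U * V)) : Prop :=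
  forall (W : lmodType F) (b : U -> V -> W), bilin b ->
    \sum_(p <- s) b p.1 p.2 = \sum_(p <- t) b p.1 p.2.

Definition teq3 (U V W : lmodType F) (s t : seq (U * V * W)) : Prop :=
  forall (X : lmodType F) (m : U -> V -> W -> X), trilin m ->
    \sum_(p <- s) m p.1.1 p.1.2 p.2 = \sum_(p <- t) m p.1.1 p.1.2 p.2.

Definition tscale (U V : lmodType F) (a : F) (s : seq (U * V)) : seq (U * V) :=
  [seq (a *: p.1, p.2) | p <- s].

(* Coalgebras (nonzero, coassociative, counital); D c is a Sweedler     *)
(* representative  sum c_(1) (x) c_(2)  of the coproduct of c.          *)
Record is_coalgebra (V : lmodType F) (D : V -> seq (V * V)) (e : V -> F)
  : Prop := {
  co_nonzero : exists c : V, c != 0;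
  co_Dlin : forall (a : F) (u v : V), teq2 (D (a *: u + v)) (tscale a (D u) ++ D v);
  co_elin : forall (a : F) (u v : V), e (a *: u + v) = a * e u + e v;
  co_coassoc : forall c : V,
    teq3 [seq (q.1, q.2, p.2) | p <- D c, q <- D p.1]
         [seq (p.1, q.1, q.2) | p <- D c, q <- D p.2];
  co_counitl : forall c : V, \sum_(p <- D c) e p.1 *: p.2 = c;
  co_counitr : forall c : V, \sum_(p <- D c) e p.2 *: p.1 = c }.

(* Hopf heaps: chi a b c = [a,b,c], a coalgebra map C (x) C^co (x) C -> C *)
Record is_hopf_heap (V : lmodType F) (D : V -> seq (V * V)) (e : V -> F)
  (chi : V -> V -> V -> V) : Prop := {
  hh_coalg : is_coalgebra D e;
  hh_trilin : trilin chi;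
  hh_Dchi : forall a b c : V,
    teq2 (D (chi a b c))
         [seq (chi p.1 qr.1.2 qr.2.1, chi p.2 qr.1.1 qr.2.2)
           | p <- D a, qr <- [seq (q, r) | q <- D b, r <- D c]];
  hh_echi : forall a b c : V, e (chi a b c) = e a * e b * e c;
  hh_assoc : forall a b c d f : V, chi (chi a b c) d f = chi a b (chi c d f);
  hh_left : forall a c : V, \sum_(p <- D c) chi p.1 p.2 a = e c *: a;
  hh_right : forall a c : V, \sum_(p <- D c) chi a p.1 p.2 = e c *: a }.

Definition grouplike (V : lmodType F) (D : V -> seq (V * V)) (e : V -> F) (x : V)
  : Prop := teq2 (D x) [:: (x, x)] /\ e x = 1.

(* Bialgebra structure on a subspace P of an ambient vector space A     *)
(* (tensor equalities are taken in A (x) A, which contains P (x) P).    *)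
Record is_bialg_on (A : lmodType F) (P : A -> Prop) (mul : A -> A -> A)
  (one : A) (D : A -> seq (A * A)) (e : A -> F) : Prop := {
  ba_sub0 : P 0;
  ba_subL : forall (a : F) u v, P u -> P v -> P (a *: u + v);
  ba_oneP : P one;
  ba_mulP : forall u v, P u -> P v -> P (mul u v);
  ba_mull : forall (a : F) u v w, P u -> P v -> P w ->
      mul (a *: u + v) w = a *: mul u w + mul v w;
  ba_mulr : forall (a : F) u v w, P u -> P v -> P w ->
      mul w (a *: u + v) = a *: mul w u + mul w v;
  ba_assoc : forall u v w, P u -> P v -> P w -> mul (mul u v) w = mul u (mul v w);
  ba_unitl : forall u, P u -> mul one u = u;
  ba_unitr : forall u, P u -> mul u one = u;
  ba_DP : forall u p, P u -> List.In p (D u) -> P p.1 /\ P p.2;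
  ba_Dlin : forall (a : F) u v, P u -> P v ->
      teq2 (D (a *: u + v)) (tscale a (D u) ++ D v);
  ba_elin : forall (a : F) u v, P u -> P v -> e (a *: u + v) = a * e u + e v;
  ba_coassoc : forall u, P u ->
    teq3 [seq (q.1, q.2, p.2) | p <- D u, q <- D p.1]
         [seq (p.1, q.1, q.2) | p <- D u, q <- D p.2];
  ba_counitl : forall u, P u -> \sum_(p <- D u) e p.1 *: p.2 = u;
  ba_counitr : forall u, P u -> \sum_(p <- D u) e p.2 *: p.1 = u;
  ba_Dmul : forall u v, P u -> P v ->
    teq2 (D (mul u v)) [seq (mul p.1 q.1, mul p.2 q.2) | p <- D u, q <- D v];
  ba_Done : teq2 (D one) [:: (one, one)];
  ba_emul : forall u v, P u -> P v -> e (mul u v) = e u * e v;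
  ba_eone : e one = 1 }.

Definition is_antipode_on (A : lmodType F) (P : A -> Prop) (mul : A -> A -> A)
  (one : A) (D : A -> seq (A * A)) (e : A -> F) (S : A -> A) : Prop :=
  [/\ forall u, P u -> P (S u),
      forall (a : F) u v, P u -> P v -> S (a *: u + v) = a *: S u + S v &
      forall u, P u ->
        \sum_(p <- D u) mul (S p.1) p.2 = e u *: one /\
        \sum_(p <- D u) mul p.1 (S p.2) = e u *: one].

Definition is_hopf_on (A : lmodType F) (P : A -> Prop) (mul : A -> A -> A)
  (one : A) (D : A -> seq (A * A)) (e : A -> F) : Prop :=
  is_bialg_on P mul one D e /\ exists S : A -> A, is_antipode_on P mul one D e S.

Record is_bialg_iso (A B : lmodType F)
  (PA : A -> Prop) (mulA : A -> A -> A) (oneA : A) (DA : A -> seq (A * A)) (eA : A -> F)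
  (PB : B -> Prop) (mulB : B -> B -> B) (oneB : B) (DB : B -> seq (B * B)) (eB : B -> F)
  (f : A -> B) : Prop := {
  iso_maps : forall u, PA u -> PB (f u);
  iso_bij : forall v, PB v -> exists! u, PA u /\ f u = v;
  iso_lin : forall (a : F) u v, PA u -> PA v -> f (a *: u + v) = a *: f u + f v;
  iso_mul : forall u v, PA u -> PA v -> f (mulA u v) = mulB (f u) (f v);
  iso_one : f oneA = oneB;
  iso_D : forall u, PA u -> teq2 (DB (f u)) [seq (f p.1, f p.2) | p <- DA u];
  iso_e : forall u, PA u -> eB (f u) = eA u }.

Definition Hx_mul (V : lmodType F) (chi : V -> V -> V -> V) (x : V) (a b : V) : V :=
  chi a x b.
Definition Hx_S (V : lmodType F) (chi : V -> V -> V -> V) (x : V) (a : V) : V :=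
  chi x a x.

Definition tau (V : lmodType F) (chi : V -> V -> V -> V) (a b : V) : V -> V :=
  fun c => chi c a b.

Definition tnr_eval (V : lmodType F) (chi : V -> V -> V -> V)
  (s : seq (F * V * V)) : V -> V :=
  \sum_(t <- s) t.1.1 *: tau chi t.1.2 t.2.

Definition inTnr (V : lmodType F) (chi : V -> V -> V -> V) (f : V -> V) : Prop :=
  exists s : seq (F * V * V), f = tnr_eval chi s.

Definition tnr_rep (V : lmodType F) (chi : V -> V -> V -> V) (f : V -> V)
  : seq (F * V * V) :=
  epsilon (inhabits [::]) (fun s => f = tnr_eval chi s).

Definition Tnr_mul (V : lmodType F) (f g : V -> V) : V -> V := fun c => g (f c).

(* Delta(tau_a^b) = sum tau_{a(2)}^{b(1)} (x) tau_{a(1)}^{b(2)}, extended linearly *)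
Definition Tnr_D (V : lmodType F) (D : V -> seq (V * V)) (chi : V -> V -> V -> V)
  (f : V -> V) : seq ((V -> V) * (V -> V)) :=
  flatten [seq tscale t.1.1
             [seq (tau chi p.2 q.1, tau chi p.1 q.2) | p <- D t.1.2, q <- D t.2]
          | t <- tnr_rep chi f].

Definition Tnr_e (V : lmodType F) (e : V -> F) (chi : V -> V -> V -> V)
  (f : V -> V) : F :=
  \sum_(t <- tnr_rep chi f) t.1.1 * (e t.1.2 * e t.2).

Definition sigma (V : lmodType F) (chi : V -> V -> V -> V) (a b : V) : V -> V :=
  fun c => chi a b c.

Definition tnl_eval (V : lmodType F) (chi : V -> V -> V -> V)
  (s : seq (F * V * V)) : V -> V :=
  \sum_(t <- s) t.1.1 *: sigma chi t.1.2 t.2.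

Definition inTnl (V : lmodType F) (chi : V -> V -> V -> V) (f : V -> V) : Prop :=
  exists s : seq (F * V * V), f = tnl_eval chi s.

Definition tnl_rep (V : lmodType F) (chi : V -> V -> V -> V) (f : V -> V)
  : seq (F * V * V) :=
  epsilon (inhabits [::]) (fun s => f = tnl_eval chi s).

Definition Tnl_mul (V : lmodType F) (f g : V -> V) : V -> V := fun c => f (g c).

(* Delta(sigma^a_b) = sum sigma^{a(1)}_{b(2)} (x) sigma^{a(2)}_{b(1)} *)
Definition Tnl_D (V : lmodType F) (D : V -> seq (V * V)) (chi : V -> V -> V -> V)
  (f : V -> V) : seq ((V -> V) * (V -> V)) :=
  flatten [seq tscale t.1.1
             [seq (sigma chi p.1 q.2, sigma chi p.2 q.1) | p <- D t.1.2, q <- D t.2]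
          | t <- tnl_rep chi f].

Definition Tnl_e (V : lmodType F) (e : V -> F) (chi : V -> V -> V -> V)
  (f : V -> V) : F :=
  \sum_(t <- tnl_rep chi f) t.1.1 * (e t.1.2 * e t.2).

End HopfHeaps.

(* Main.v *)
Require Import Defs.
From HB Require Import structures.
From mathcomp Require Import all_boot all_order all_algebra.
From mathcomp Require Import boolp classical_sets functions.
From Stdlib Require Import ClassicalEpsilon.

Set Implicit Arguments.
Unset Strict Implicit.
Unset Printing Implicit Defensive.
Import GRing.Theory.
Local Open Scope ring_scope.

Section Basics.
Variable F : fieldType.
Implicit Types U W X : lmodType F.

Lemma linD U W (f : U -> W) : lin f -> forall u v, f (u + v) = f u + f v.
Proof. by move=> H u v; have := H 1 u v; rewrite !scale1r. Qed.

Lemma lin0 U W (f : U -> W) : lin f -> f 0 = 0.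
Proof.
move=> H; apply: (@addrI _ (f 0)); by rewrite addr0 -linD // addr0.
Qed.

Lemma linZ U W (f : U -> W) : lin f -> forall a u, f (a *: u) = a *: f u.
Proof. by move=> H a u; rewrite -[a *: u]addr0 H lin0 // addr0. Qed.

Lemma lin_sum U W (f : U -> W) I (r : seq I) (G : I -> U) : lin f ->
  f (\sum_(i <- r) G i) = \sum_(i <- r) f (G i).
Proof.
move=> H; elim: r => [|i r IH]; first by rewrite !big_nil lin0.
by rewrite !big_cons linD // IH.
Qed.

Lemma lin_of U W (f : U -> W) :
  (forall u v, f (u + v) = f u + f v) -> (forall a u, f (a *: u) = a *: f u) -> lin f.
Proof. by move=> HD HZ a u v; rewrite HD HZ. Qed.

Lemma lin_comp U W X (f : U -> W) (g : W -> X) : lin f -> lin g -> lin (fun u => g (f u)).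
Proof. by move=> Hf Hg a u v; rewrite Hf Hg. Qed.

Lemma lin_sumf U W I (r : seq I) (G : I -> U -> W) :
  (forall i, lin (G i)) -> lin (fun u => \sum_(i <- r) G i u).
Proof.
move=> H a u v; elim: r => [|i r IH]; first by rewrite !big_nil scaler0 addr0.
by rewrite !big_cons IH H scalerDr addrACA.
Qed.

Lemma lin_scalef U W (k : F) (G : U -> W) : lin G -> lin (fun u => k *: G u).
Proof. by move=> H a u v; rewrite H scalerDr !scalerA mulrC. Qed.

Lemma lin_scalel U W (k : U -> F) (w : W) :
  (forall a u v, k (a *: u + v) = a * k u + k v) -> lin (fun u => k u *: w).
Proof. by move=> H a u v; rewrite H scalerDl scalerA. Qed.

Lemma lin_ext U W (G H : U -> W) : (forall u, G u = H u) -> lin G -> lin H.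
Proof. by move=> E HG a u v; rewrite -!E. Qed.

Lemma lin_id U : lin (fun u : U => u).
Proof. by []. Qed.

Lemma lin_const0 U W : lin (fun _ : U => 0 : W).
Proof. by move=> a u v; rewrite scaler0 addr0. Qed.

Definition bs U W (h : U -> U -> W) (s : seq (U * U)) : W := \sum_(p <- s) h p.1 p.2.

Lemma teq2E U (s t : seq (U * U)) : teq2 s t ->
  forall W (h : U -> U -> W), bilin h -> bs h s = bs h t.
Proof. by move=> H W h Hh; apply: H. Qed.

Lemma bs_cat U W (h : U -> U -> W) s t : bs h (s ++ t) = bs h s + bs h t.
Proof. by rewrite /bs big_cat. Qed.

Lemma bs_tscale U W (h : U -> U -> W) a s : (forall v, lin (h^~ v)) ->
  bs h (tscale a s) = a *: bs h s.
Proof. move=> H; rewrite /bs /tscale big_map scaler_sumr; apply: eq_bigr => p _.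
by rewrite (linZ (H _)). Qed.

Lemma bs_map U U' W (h : U' -> U' -> W) (f g : U -> U') s :
  bs h [seq (f p.1, g p.2) | p <- s] = bs (fun y z => h (f y) (g z)) s.
Proof. by rewrite /bs big_map. Qed.

Lemma eq_big_In I (V : nmodType) (r : seq I) (G H : I -> V) :
  (forall i, List.In i r -> G i = H i) ->
  \sum_(i <- r) G i = \sum_(i <- r) H i :> V.
Proof.
elim: r => [|i r IH] E; first by rewrite !big_nil.
rewrite !big_cons E /=; last by left.
by rewrite IH // => j Hj; apply: E; right.
Qed.

Lemma In_map I J (f : I -> J) (s : seq I) y : List.In y (map f s) ->
  exists x, List.In x s /\ y = f x.
Proof.
elim: s => [|x s IH] //= [<-|/IH [z [Hz ->]]]; first by exists x; split=> //; left.
by exists z; split=> //; right.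
Qed.

Lemma In_flatten I (ss : seq (seq I)) y : List.In y (flatten ss) ->
  exists s, List.In s ss /\ List.In y s.
Proof.
elim: ss => [|s ss IH] //= H; case: (List.in_app_or _ _ _ H) => [{}H|/IH [t [Ht Hy]]].
  by exists s; split=> //; left.
by exists t; split=> //; right.
Qed.

Lemma Dlin_bs U W (D : U -> seq (U * U)) (h : U -> U -> W) :
  (forall a u v, teq2 (D (a *: u + v)) (tscale a (D u) ++ D v)) ->
  bilin h -> lin (fun u => bs h (D u)).
Proof.
move=> HD Hh a u v; rewrite (teq2E (HD a u v) Hh) bs_cat bs_tscale //.
by case: Hh.
Qed.

Lemma bilin_comp U U' W (h : U' -> U' -> W) (f1 f2 : U -> U') :
  bilin h -> lin f1 -> lin f2 -> bilin (fun y z => h (f1 y) (f2 z)).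
Proof.
case=> H1 H2 L1 L2; split=> [z|y].
  exact: (lin_comp L1 (H1 (f2 z))).
exact: (lin_comp L2 (H2 (f1 y))).
Qed.

End Basics.
Section Transport.
Variable F : fieldType.
Variables (A B : lmodType F).
Implicit Types W X : lmodType F.
Variables (mA : A -> A -> A) (oA : A) (DA : A -> seq (A * A)) (eA : A -> F).
Variables (PB : B -> Prop) (mB : B -> B -> B) (oB : B) (DB : B -> seq (B * B)) (eB : B -> F).
Variables (f : A -> B) (g : B -> A).
Hypothesis HA : is_bialg_on (fun _ : A => True) mA oA DA eA.
Hypothesis HI : is_bialg_iso (fun _ : A => True) mA oA DA eA PB mB oB DB eB f.
Hypothesis Hg : lin g.
Hypothesis Hgf : forall u, g (f u) = u.
Hypothesis HDP : forall u p, PB u -> List.In p (DB u) -> PB p.1 /\ PB p.2.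

Let Hf : lin f. Proof. by move=> a u v; rewrite (iso_lin HI a (u:=u) (v:=v) I I). Qed.

Let Hfg v : PB v -> f (g v) = v.
Proof. by move=> Hv; case: (iso_bij HI Hv) => u [[_ <-] _]; rewrite Hgf. Qed.

Let DAlin : forall a u v, teq2 (DA (a *: u + v)) (tscale a (DA u) ++ DA v).
Proof. by move=> a u v; exact: (ba_Dlin HA a (u:=u) (v:=v) I I). Qed.

Let PBf u : PB (f u). Proof. exact: (iso_maps HI (u:=u) I). Qed.

Let mBE u v : PB u -> PB v -> mB u v = f (mA (g u) (g v)).
Proof. by move=> Hu Hv; rewrite -{1}(Hfg Hu) -{1}(Hfg Hv) (iso_mul HI). Qed.

Let eBE u : PB u -> eB u = eA (g u).
Proof. by move=> Hu; rewrite -{1}(Hfg Hu) (iso_e HI). Qed.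

Let oBE : oB = f oA. Proof. by rewrite (iso_one HI). Qed.

Let subL a u v : PB u -> PB v -> PB (a *: u + v).
Proof. by move=> Hu Hv; rewrite -(Hfg Hu) -(Hfg Hv) -Hf. Qed.

Let mAl a u v w : mA (a *: u + v) w = a *: mA u w + mA v w.
Proof. exact: (ba_mull HA a (u:=u) (v:=v) (w:=w) I I I). Qed.
Let mAr a u v w : mA w (a *: u + v) = a *: mA w u + mA w v.
Proof. exact: (ba_mulr HA a (u:=u) (v:=v) (w:=w) I I I). Qed.
Let eAlin a u v : eA (a *: u + v) = a * eA u + eA v.
Proof. exact: (ba_elin HA a (u:=u) (v:=v) I I). Qed.

Let KEY1 W (h : B -> B -> W) u : PB u -> bilin h ->
  bs h (DB u) = bs (fun y z => h (f y) (f z)) (DA (g u)).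
Proof.
by move=> Hu Hh; rewrite -{1}(Hfg Hu) (teq2E (iso_D HI (u:=g u) I) Hh) bs_map.
Qed.

Let KEY2 W (H : A -> A -> W) u : PB u -> bilin H ->
  bs (fun y z => H (g y) (g z)) (DB u) = bs H (DA (g u)).
Proof.
move=> Hu HH; rewrite KEY1 //; last exact: bilin_comp.
by rewrite /bs; apply: eq_bigr => p _; rewrite !Hgf.
Qed.

Let DAl W (H : A -> A -> W) : bilin H -> lin (fun y => bs H (DA (g y))).
Proof. by move=> HH; exact: (lin_comp Hg (Dlin_bs DAlin HH)). Qed.

Let mAlinL c : lin (fun y => mA y c).
Proof. by move=> a u v; rewrite mAl. Qed.
Let mAlinR c : lin (mA c).
Proof. by move=> a u v; rewrite mAr. Qed.

Lemma transport_bialg : is_bialg_on PB mB oB DB eB.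
Proof.
split.
- by rewrite -(lin0 Hf).
- exact: subL.
- by rewrite oBE.
- by move=> u v Hu Hv; rewrite mBE.
- move=> a u v w Hu Hv Hw; rewrite (mBE (subL a Hu Hv) Hw) !mBE //.
  by rewrite Hg mAl Hf.
- move=> a u v w Hu Hv Hw; rewrite (mBE Hw (subL a Hu Hv)) !mBE //.
  by rewrite Hg mAr Hf.
- move=> u v w Hu Hv Hw; rewrite [mB u v]mBE // [mB v w]mBE // !mBE ?PBf // !Hgf.
  by rewrite (ba_assoc HA).
- by move=> u Hu; rewrite oBE mBE // Hgf (ba_unitl HA) // Hfg.
- by move=> u Hu; rewrite oBE mBE // Hgf (ba_unitr HA) // Hfg.
- exact: HDP.
- move=> a u v Hu Hv W h Hh.
  change (bs h (DB (a *: u + v)) = bs h (tscale a (DB u) ++ DB v)).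
  rewrite bs_cat bs_tscale; last by case: Hh.
  rewrite (KEY1 (subL a Hu Hv) Hh) !KEY1 // Hg.
  by rewrite (Dlin_bs DAlin (bilin_comp Hh Hf Hf)).
- by move=> a u v Hu Hv; rewrite (eBE (subL a Hu Hv)) !eBE // Hg eAlin.
- move=> u Hu X m Hm; case: (Hm) => Hm1 Hm2 Hm3.
  have Hm' : trilin (fun a b c => m (f a) (f b) (f c)).
    split=> [v w|v w|v w]; first exact: (lin_comp Hf (Hm1 (f v) (f w))).
      exact: (lin_comp Hf (Hm2 (f v) (f w))).
    exact: (lin_comp Hf (Hm3 (f v) (f w))).
  have HC := ba_coassoc HA (u:=g u) I Hm'.
  rewrite !big_allpairs_dep /= in HC.
  rewrite !big_allpairs_dep /=.
  transitivity (\sum_(p <- DA (g u)) \sum_(q <- DA p.1) m (f q.1) (f q.2) (f p.2)).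
    rewrite (eq_big_In (H := fun p => bs (fun r1 r2 => m (f r1) (f r2) p.2) (DA (g p.1)))); last first.
      move=> p Hp; case: (HDP Hu Hp) => H1 H2.
      transitivity (bs (fun y z => m y z p.2) (DB p.1)); first reflexivity; rewrite KEY1 //;
      try by split=> [z|y]; [exact: (Hm1 z p.2) | exact: (Hm2 y p.2)].
    transitivity (bs (fun y z => bs (fun r1 r2 => m (f r1) (f r2) z) (DA (g y))) (DB u)); first reflexivity.
    rewrite KEY1 //; last first.
      split=> [z|y].
        have Hb : bilin (fun y' z' => m y' z' z).
          by split=> [z'|y']; [exact: (Hm1 z' z) | exact: (Hm2 y' z)].
        exact: (DAl (bilin_comp Hb Hf Hf)).
      by apply: lin_sumf => r; exact: Hm3.
    by rewrite /bs; apply: eq_bigr => p _; rewrite Hgf.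
  rewrite HC; symmetry.
  rewrite (eq_big_In (H := fun p => bs (fun r1 r2 => m p.1 (f r1) (f r2)) (DA (g p.2)))); last first.
    move=> p Hp; case: (HDP Hu Hp) => H1 H2.
    transitivity (bs (fun y z => m p.1 y z) (DB p.2)); first reflexivity; rewrite KEY1 //;
    try by split=> [z|y]; [exact: (Hm2 p.1 z) | exact: (Hm3 p.1 y)].
  transitivity (bs (fun y z => bs (fun r1 r2 => m y (f r1) (f r2)) (DA (g z))) (DB u)); first reflexivity.
  rewrite KEY1 //; last first.
    split=> [z|y].
      by apply: lin_sumf => r; exact: Hm1.
    have Hb : bilin (fun y' z' => m y y' z').
      by split=> [z'|y']; [exact: (Hm2 y z') | exact: (Hm3 y y')].
    exact: (DAl (bilin_comp Hb Hf Hf)).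
  by rewrite /bs; apply: eq_bigr => p _; rewrite Hgf.
- move=> u Hu.
  rewrite (eq_big_In (H := fun p => eA (g p.1) *: f (g p.2))); last first.
    by move=> p Hp; case: (HDP Hu Hp) => H1 H2; rewrite eBE // Hfg.
  change (bs (fun y z => (fun y z => eA y *: f z) (g y) (g z)) (DB u) = u).
  rewrite KEY2 //; last first.
    split=> [z|y]; first exact: lin_scalel.
    exact: lin_scalef.
  rewrite /bs; transitivity (f (\sum_(p <- DA (g u)) eA p.1 *: p.2)).
    by rewrite (lin_sum _ _ Hf); apply: eq_bigr => p _; rewrite (linZ Hf).
  by rewrite (ba_counitl HA) // Hfg.
- move=> u Hu.
  rewrite (eq_big_In (H := fun p => eA (g p.2) *: f (g p.1))); last first.
    by move=> p Hp; case: (HDP Hu Hp) => H1 H2; rewrite eBE // Hfg.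
  change (bs (fun y z => (fun y z => eA z *: f y) (g y) (g z)) (DB u) = u).
  rewrite KEY2 //; last first.
    split=> [z|y]; first exact: lin_scalef.
    exact: lin_scalel.
  rewrite /bs; transitivity (f (\sum_(p <- DA (g u)) eA p.2 *: p.1)).
    by rewrite (lin_sum _ _ Hf); apply: eq_bigr => p _; rewrite (linZ Hf).
  by rewrite (ba_counitr HA) // Hfg.
- move=> u v Hu Hv W h Hh.
  change (bs h (DB (mB u v)) = \sum_(i <- [seq (mB p.1 q.1, mB p.2 q.2) | p <- DB u, q <- DB v]) h i.1 i.2).
  rewrite big_allpairs_dep /=.
  rewrite (eq_big_In (H := fun p => bs (fun r1 r2 => h (f (mA (g p.1) r1)) (f (mA (g p.2) r2))) (DA (g v)))); last first.
    move=> p Hp; case: (HDP Hu Hp) => H1 H2.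
    rewrite -KEY2 //; last first.
      apply: bilin_comp => //; apply: lin_comp => //.
    rewrite /bs; apply: eq_big_In => q Hq; case: (HDP Hv Hq) => H3 H4.
    by rewrite !mBE.
  change (bs h (DB (mB u v)) = bs (fun y z => (fun y z => bs (fun r1 r2 => h (f (mA y r1)) (f (mA z r2))) (DA (g v))) (g y) (g z)) (DB u)).
  rewrite KEY2 //; last first.
    case: Hh => Hh1 Hh2; split=> [z|y].
      apply: lin_sumf => r; exact: (lin_comp (lin_comp (mAlinL r.1) Hf) (Hh1 (f (mA z r.2)))).
    apply: lin_sumf => r; exact: (lin_comp (lin_comp (mAlinL r.2) Hf) (Hh2 (f (mA y r.1)))).
  rewrite mBE // KEY1 ?PBf // Hgf (teq2E (ba_Dmul HA (u:=g u) (v:=g v) I I) (bilin_comp Hh Hf Hf)).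
  by rewrite /bs big_allpairs_dep.
- move=> W h Hh.
  change (bs h (DB oB) = \sum_(p <- [:: (oB, oB)]) h p.1 p.2).
  rewrite big_seq1 oBE KEY1 ?PBf // Hgf (teq2E (ba_Done HA) (bilin_comp Hh Hf Hf)).
  by rewrite /bs big_seq1.
- by move=> u v Hu Hv; rewrite mBE // eBE ?PBf // Hgf (ba_emul HA) // !eBE.
- by rewrite oBE eBE ?PBf // Hgf (ba_eone HA).
Qed.

Lemma transport_antipode (SA : A -> A) :
  is_antipode_on (fun _ : A => True) mA oA DA eA SA ->
  is_antipode_on PB mB oB DB eB (fun v => f (SA (g v))).
Proof.
case=> _ HSlin HS.
have HSl : lin SA by move=> a u v; exact: (HSlin a u v I I).
split.
- by move=> u _.
- by move=> a u v Hu Hv; rewrite Hg HSl Hf.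
move=> u Hu; split.
- rewrite (eq_big_In (H := fun p => f (mA (SA (g p.1)) (g p.2)))); last first.
    by move=> p Hp; case: (HDP Hu Hp) => H1 H2; rewrite mBE ?PBf // Hgf.
  transitivity (bs (fun y z => (fun y z => f (mA (SA y) z)) (g y) (g z)) (DB u)); first reflexivity.
  rewrite (KEY2 (H := fun y z => f (mA (SA y) z))) //; last first.
    split=> [z|y]; first exact: (lin_comp HSl (lin_comp (mAlinL z) Hf)).
    exact: (lin_comp (mAlinR _) Hf).
  rewrite /bs; transitivity (f (\sum_(p <- DA (g u)) mA (SA p.1) p.2)).
    by rewrite (lin_sum _ _ Hf).
  by rewrite (HS (g u) I).1 (linZ Hf) oBE eBE.
- rewrite (eq_big_In (H := fun p => f (mA (g p.1) (SA (g p.2))))); last first.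
    by move=> p Hp; case: (HDP Hu Hp) => H1 H2; rewrite mBE ?PBf // Hgf.
  transitivity (bs (fun y z => (fun y z => f (mA y (SA z))) (g y) (g z)) (DB u)); first reflexivity.
  rewrite (KEY2 (H := fun y z => f (mA y (SA z)))) //; last first.
    split=> [z|y]; first exact: (lin_comp (mAlinL _) Hf).
    exact: (lin_comp HSl (lin_comp (mAlinR y) Hf)).
  rewrite /bs; transitivity (f (\sum_(p <- DA (g u)) mA p.1 (SA p.2))).
    by rewrite (lin_sum _ _ Hf).
  by rewrite (HS (g u) I).2 (linZ Hf) oBE eBE.
Qed.
End Transport.

Section Heap.
Variable F : fieldType.
Variable V : lmodType F.
Implicit Types W X : lmodType F.
Variables (D : V -> seq (V * V)) (e : V -> F) (chi : V -> V -> V -> V) (x : V).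
Hypothesis HH : is_hopf_heap D e chi.
Hypothesis Hx : grouplike D e x.

Let HC : is_coalgebra D e. Proof. exact: hh_coalg HH. Qed.
Let C1 v w : lin (fun u => chi u v w). Proof. by case: (hh_trilin HH). Qed.
Let C2 u w : lin (fun v => chi u v w). Proof. by case: (hh_trilin HH). Qed.
Let C3 u v : lin (chi u v). Proof. by case: (hh_trilin HH). Qed.
Let Dlin : forall a u v, teq2 (D (a *: u + v)) (tscale a (D u) ++ D v).
Proof. exact: co_Dlin HC. Qed.
Let ex : e x = 1. Proof. by case: Hx. Qed.

Let bsDx W (h : V -> V -> W) : bilin h -> bs h (D x) = h x x.
Proof. by move=> Hh; rewrite (teq2E Hx.1 Hh) /bs big_seq1. Qed.

Lemma chixx_r c : chi c x x = c.
Proof.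
have H := hh_right HH c x; rewrite ex scale1r in H.
transitivity (bs (chi c) (D x)); last by [].
by rewrite bsDx //; try (split=> [z|y]; [exact: C2 | exact: C3]).
Qed.

Lemma chixx_l c : chi x x c = c.
Proof.
have H := hh_left HH c x; rewrite ex scale1r in H.
transitivity (bs (fun y z => chi y z c) (D x)); last by [].
by rewrite bsDx //; try (split=> [z|y]; [exact: C1 | exact: C2]).
Qed.

Let e0 : e 0 = 0.
Proof.
have := co_elin HC 1 0 0; rewrite scaler0 addr0 mul1r => H.
by apply: (@addrI _ (e 0)); rewrite addr0 -H.
Qed.
Let eD u v : e (u + v) = e u + e v.
Proof. by have := co_elin HC 1 u v; rewrite scale1r mul1r. Qed.
Let eZ a u : e (a *: u) = a * e u.
Proof. by have := co_elin HC a u 0; rewrite addr0 e0 addr0. Qed.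
Let e_sum I (r : seq I) (G : I -> V) : e (\sum_(i <- r) G i) = \sum_(i <- r) e (G i).
Proof.
elim: r => [|i r IH]; first by rewrite !big_nil e0.
by rewrite !big_cons eD IH.
Qed.

Lemma Hx_bialg : is_bialg_on (fun _ : V => True) (Hx_mul chi x) x D e.
Proof.
split => //.
- by move=> a u v w _ _ _; exact: C1.
- by move=> a u v w _ _ _; exact: C3.
- by move=> u v w _ _ _; rewrite /Hx_mul (hh_assoc HH).
- by move=> u _; rewrite /Hx_mul chixx_l.
- by move=> u _; rewrite /Hx_mul chixx_r.
- by move=> a u v _ _; exact: (co_elin HC).
- by move=> u _; exact: (co_coassoc HC).
- by move=> u _; exact: (co_counitl HC).
- by move=> u _; exact: (co_counitr HC).
- move=> u v _ _ W h Hh.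
  transitivity (bs h (D (chi u x v))); first by [].
  rewrite /Hx_mul (teq2E (hh_Dchi HH u x v) Hh) /bs big_allpairs_dep big_allpairs_dep /=.
  apply: eq_bigr => p _; rewrite big_allpairs_dep /=.
  transitivity (bs (fun y z => \sum_(r <- D v) h (chi p.1 z r.1) (chi p.2 y r.2)) (D x)).
    by [].
  rewrite bsDx //; case: Hh => Hh1 Hh2; split=> [z|y].
    by apply: lin_sumf => r; exact: (lin_comp (C2 p.2 r.2) (Hh2 _)).
  by apply: lin_sumf => r; exact: (lin_comp (C2 p.1 r.1) (Hh1 _)).
- exact: Hx.1.
- by move=> u v _ _; rewrite /Hx_mul (hh_echi HH) ex mulr1.
Qed.

Lemma Hx_antipode : is_antipode_on (fun _ : V => True) (Hx_mul chi x) x D e (Hx_S chi x).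
Proof.
split=> //.
- by move=> a u v _ _; exact: C2.
move=> u _; split.
- rewrite -(hh_right HH x u); apply: eq_bigr => p _.
  by rewrite /Hx_mul /Hx_S (hh_assoc HH) chixx_l.
- rewrite -(hh_left HH x u); apply: eq_bigr => p _.
  by rewrite /Hx_mul /Hx_S -(hh_assoc HH) chixx_r.
Qed.

Lemma DchiX W (h : V -> V -> W) a b : bilin h ->
  bs h (D (chi x a b)) = \sum_(p <- D a) \sum_(q <- D b) h (chi x p.2 q.1) (chi x p.1 q.2).
Proof.
move=> Hh; rewrite (teq2E (hh_Dchi HH x a b) Hh) /bs big_allpairs_dep /=.
under eq_bigr => r _ do rewrite big_allpairs_dep /=.
transitivity (bs (fun y z => \sum_(p <- D a) \sum_(q <- D b) h (chi y p.2 q.1) (chi z p.1 q.2)) (D x)).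
  by [].
rewrite bsDx //; case: Hh => Hh1 Hh2; split=> [z|y].
  apply: lin_sumf => p; apply: lin_sumf => q; exact: (lin_comp (C1 p.2 q.1) (Hh1 _)).
apply: lin_sumf => p; apply: lin_sumf => q; exact: (lin_comp (C1 p.1 q.2) (Hh2 _)).
Qed.

Lemma DchiX' W (h : V -> V -> W) a b : bilin h ->
  bs h (D (chi a b x)) = \sum_(p <- D a) \sum_(q <- D b) h (chi p.1 q.2 x) (chi p.2 q.1 x).
Proof.
move=> Hh; rewrite (teq2E (hh_Dchi HH a b x) Hh) /bs big_allpairs_dep /=.
apply: eq_bigr => p _; rewrite big_allpairs_dep /=; apply: eq_bigr => q _.
transitivity (bs (fun y z => h (chi p.1 q.2 y) (chi p.2 q.1 z)) (D x)).
  by [].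
rewrite bsDx //; case: Hh => Hh1 Hh2; split=> [z|y].
  exact: (lin_comp (C3 p.1 q.2) (Hh1 _)).
exact: (lin_comp (C3 p.2 q.1) (Hh2 _)).
Qed.


Lemma tau_lin : lin (tau chi x).
Proof. by move=> a u v; apply/funext => c; exact: C3. Qed.

Lemma sigma_lin : lin (fun a => sigma chi a x).
Proof. by move=> a u v; apply/funext => c; exact: C1. Qed.

Let teval s c : tnr_eval chi s c = \sum_(t <- s) t.1.1 *: chi c t.1.2 t.2.
Proof. by rewrite /tnr_eval fct_sumE. Qed.

Let tevall s c : tnl_eval chi s c = \sum_(t <- s) t.1.1 *: chi t.1.2 t.2 c.
Proof. by rewrite /tnl_eval fct_sumE. Qed.

Let tnr_tau s : tnr_eval chi s = tau chi x (tnr_eval chi s x).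
Proof.
apply/funext => c; rewrite /tau !teval (lin_sum _ _ (C3 c x)).
apply: eq_bigr => t _; rewrite (linZ (C3 c x)).
by rewrite -(hh_assoc HH) chixx_r.
Qed.

Let tnl_sigma s : tnl_eval chi s = sigma chi (tnl_eval chi s x) x.
Proof.
apply/funext => c; rewrite /sigma !tevall (lin_sum _ _ (C1 x c)).
apply: eq_bigr => t _; rewrite (linZ (C1 x c)).
by rewrite (hh_assoc HH) chixx_l.
Qed.

Let rep_r f : inTnr chi f -> f = tnr_eval chi (tnr_rep chi f).
Proof.
case=> s Hs; rewrite /tnr_rep.
exact: (epsilon_spec (inhabits [::]) (fun s => f = tnr_eval chi s) (ex_intro _ s Hs)).
Qed.

Let rep_l f : inTnl chi f -> f = tnl_eval chi (tnl_rep chi f).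
Proof.
case=> s Hs; rewrite /tnl_rep.
exact: (epsilon_spec (inhabits [::]) (fun s => f = tnl_eval chi s) (ex_intro _ s Hs)).
Qed.

Lemma tau_xchi a b : tau chi x (chi x a b) = tau chi a b.
Proof. by apply/funext => c; rewrite /tau -(hh_assoc HH) chixx_r. Qed.

Lemma sigma_xchi a b : sigma chi (chi a b x) x = sigma chi a b.
Proof. by apply/funext => c; rewrite /sigma (hh_assoc HH) chixx_l. Qed.

Let inTnr_tau k a b : inTnr chi (k *: tau chi a b).
Proof. by exists [:: (k, a, b)]; rewrite /tnr_eval big_seq1. Qed.

Let inTnl_sigma k a b : inTnl chi (k *: sigma chi a b).
Proof. by exists [:: (k, a, b)]; rewrite /tnl_eval big_seq1. Qed.

Lemma Tnr_DP u p : inTnr chi u -> List.In p (Tnr_D D chi u) ->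
  inTnr chi p.1 /\ inTnr chi p.2.
Proof.
move=> _ H0; rewrite /Tnr_D in H0.
case: (In_flatten H0) => l [H1 H2]; case: (In_map H1) => t [_ El]; subst l.
rewrite /tscale in H2; case: (In_map H2) => q [H3 Eq]; subst p.
case: (In_flatten H3) => l' [H4 H5]; case: (In_map H4) => r [_ El']; subst l'.
case: (In_map H5) => r' [_ Er]; subst q => /=.
split; first exact: inTnr_tau.
by rewrite -[tau _ _ _]scale1r.
Qed.

Lemma Tnl_DP u p : inTnl chi u -> List.In p (Tnl_D D chi u) ->
  inTnl chi p.1 /\ inTnl chi p.2.
Proof.
move=> _ H0; rewrite /Tnl_D in H0.
case: (In_flatten H0) => l [H1 H2]; case: (In_map H1) => t [_ El]; subst l.
rewrite /tscale in H2; case: (In_map H2) => q [H3 Eq]; subst p.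
case: (In_flatten H3) => l' [H4 H5]; case: (In_map H4) => r [_ El']; subst l'.
case: (In_map H5) => r' [_ Er]; subst q => /=.
split; first exact: inTnl_sigma.
by rewrite -[sigma _ _ _]scale1r.
Qed.

Lemma tau_iso : is_bialg_iso (fun _ : V => True) (Hx_mul chi x) x D e
                   (inTnr chi) (@Tnr_mul F V) (fun c : V => c) (Tnr_D D chi) (Tnr_e e chi)
                   (fun a => tau chi x a).
Proof.
split.
- by move=> u _; rewrite -[tau _ _ _]scale1r.
- move=> v [s ->]; exists (tnr_eval chi s x); split; first by split=> //; rewrite -tnr_tau.
  by move=> u [_ <-]; rewrite /tau chixx_l.
- by move=> a u v _ _; exact: tau_lin.
- by move=> u v _ _; apply/funext => c; rewrite /Tnr_mul /Hx_mul /tau (hh_assoc HH).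
- by apply/funext => c; rewrite /tau chixx_r.
- move=> u _ W h Hh.
  have Hs := rep_r (inTnr_tau 1 x u); rewrite scale1r in Hs.
  set s := tnr_rep chi (tau chi x u) in Hs *.
  have Hh' : bilin (fun y z => h (tau chi x y) (tau chi x z)) by exact: bilin_comp Hh tau_lin tau_lin.
  have HL := Dlin_bs Dlin Hh'.
  rewrite big_map /Tnr_D -/s big_flatten big_map /=.
  transitivity (\sum_(t <- s) t.1.1 *: bs (fun y z => h (tau chi x y) (tau chi x z)) (D (chi x t.1.2 t.2))).
    apply: eq_bigr => t _.
    transitivity (bs h (tscale t.1.1 [seq (tau chi p.2 q.1, tau chi p.1 q.2) | p <- D t.1.2, q <- D t.2])).
      by [].
    rewrite bs_tscale; last by case: Hh.
    rewrite DchiX // /bs big_allpairs_dep.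
    by congr (_ *: _); apply: eq_bigr => p _; apply: eq_bigr => q _; rewrite !tau_xchi.
  transitivity (bs (fun y z => h (tau chi x y) (tau chi x z)) (D (\sum_(t <- s) t.1.1 *: chi x t.1.2 t.2))).
    by rewrite (lin_sum _ _ HL); apply: eq_bigr => t _; rewrite (linZ HL).
  by rewrite -teval -Hs /tau chixx_l.
- move=> u _.
  have Hs := rep_r (inTnr_tau 1 x u); rewrite scale1r in Hs.
  rewrite /Tnr_e; set s := tnr_rep chi (tau chi x u) in Hs *.
  have -> : u = tnr_eval chi s x by rewrite -Hs /tau chixx_l.
  rewrite teval e_sum; apply: eq_bigr => t _.
  by rewrite eZ (hh_echi HH) ex mul1r.
Qed.

Lemma sigma_iso : is_bialg_iso (fun _ : V => True) (Hx_mul chi x) x D e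
                   (inTnl chi) (@Tnl_mul F V) (fun c : V => c) (Tnl_D D chi) (Tnl_e e chi)
                   (fun a => sigma chi a x).
Proof.
split.
- by move=> u _; rewrite -[sigma _ _ _]scale1r.
- move=> v [s ->]; exists (tnl_eval chi s x); split; first by split=> //; rewrite -tnl_sigma.
  by move=> u [_ <-]; rewrite /sigma chixx_r.
- by move=> a u v _ _; exact: sigma_lin.
- by move=> u v _ _; apply/funext => c; rewrite /Tnl_mul /Hx_mul /sigma (hh_assoc HH).
- by apply/funext => c; rewrite /sigma chixx_l.
- move=> u _ W h Hh.
  have Hs := rep_l (inTnl_sigma 1 u x); rewrite scale1r in Hs.
  set s := tnl_rep chi (sigma chi u x) in Hs *.
  have Hh' : bilin (fun y z => h (sigma chi y x) (sigma chi z x)) by exact: bilin_comp Hh sigma_lin sigma_lin.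
  have HL := Dlin_bs Dlin Hh'.
  rewrite big_map /Tnl_D -/s big_flatten big_map /=.
  transitivity (\sum_(t <- s) t.1.1 *: bs (fun y z => h (sigma chi y x) (sigma chi z x)) (D (chi t.1.2 t.2 x))).
    apply: eq_bigr => t _.
    transitivity (bs h (tscale t.1.1 [seq (sigma chi p.1 q.2, sigma chi p.2 q.1) | p <- D t.1.2, q <- D t.2])).
      by [].
    rewrite bs_tscale; last by case: Hh.
    rewrite DchiX' // /bs big_allpairs_dep.
    by congr (_ *: _); apply: eq_bigr => p _; apply: eq_bigr => q _; rewrite !sigma_xchi.
  transitivity (bs (fun y z => h (sigma chi y x) (sigma chi z x)) (D (\sum_(t <- s) t.1.1 *: chi t.1.2 t.2 x))).
    by rewrite (lin_sum _ _ HL); apply: eq_bigr => t _; rewrite (linZ HL).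
  by rewrite -tevall -Hs /sigma chixx_r.
- move=> u _.
  have Hs := rep_l (inTnl_sigma 1 u x); rewrite scale1r in Hs.
  rewrite /Tnl_e; set s := tnl_rep chi (sigma chi u x) in Hs *.
  have -> : u = tnl_eval chi s x by rewrite -Hs /sigma chixx_r.
  rewrite tevall e_sum; apply: eq_bigr => t _.
  by rewrite eZ (hh_echi HH) ex mulr1.
Qed.

End Heap.

Theorem mainTheorem5 (F : fieldType) (V : lmodType F)
  (D : V -> seq (V * V)) (e : V -> F) (chi : V -> V -> V -> V) (x : V) :
  is_hopf_heap D e chi -> grouplike D e x ->
  [/\ (* H_x(C) is a Hopf algebra (bialgebra with antipode a |-> [x,a,x]) *)
      is_bialg_on (fun _ : V => True) (Hx_mul chi x) x D e /\
      is_antipode_on (fun _ : V => True) (Hx_mul chi x) x D e (Hx_S chi x),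
      (* Tn^r C and Tn^l C are bialgebras *)
      is_bialg_on (inTnr chi) (@Tnr_mul F V) (fun c : V => c) (Tnr_D D chi) (Tnr_e e chi) /\
      is_bialg_on (inTnl chi) (@Tnl_mul F V) (fun c : V => c) (Tnl_D D chi) (Tnl_e e chi),
      (* H_x(C) ~ Tn^r C via a |-> tau_x^a, inverse tau_a^b |-> [x,a,b] *)
      is_bialg_iso (fun _ : V => True) (Hx_mul chi x) x D e
                   (inTnr chi) (@Tnr_mul F V) (fun c : V => c) (Tnr_D D chi) (Tnr_e e chi)
                   (fun a => tau chi x a) /\
      (forall a b : V, tau chi x (chi x a b) = tau chi a b),
      (* H_x(C) ~ Tn^l C via a |-> sigma^a_x *)
      is_bialg_iso (fun _ : V => True) (Hx_mul chi x) x D e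
                   (inTnl chi) (@Tnl_mul F V) (fun c : V => c) (Tnl_D D chi) (Tnl_e e chi)
                   (fun a => sigma chi a x) &
      (* consequently Tn^r C and Tn^l C are Hopf algebras *)
      is_hopf_on (inTnr chi) (@Tnr_mul F V) (fun c : V => c) (Tnr_D D chi) (Tnr_e e chi) /\
      is_hopf_on (inTnl chi) (@Tnl_mul F V) (fun c : V => c) (Tnl_D D chi) (Tnl_e e chi)].
Proof.
move=> HH Hx.
have HA := Hx_bialg HH Hx.
have HS := Hx_antipode HH Hx.
have IT := tau_iso HH Hx.
have IS := sigma_iso HH Hx.
have Hg : lin (fun h : V -> V => h x) by move=> a u v.
have HgfT : forall u : V, (fun h : V -> V => h x) ((fun a => tau chi x a) u) = u.
  by move=> u; exact: chixx_l HH Hx u.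
have HgfS : forall u : V, (fun h : V -> V => h x) ((fun a => sigma chi a x) u) = u.
  by move=> u; exact: chixx_r HH Hx u.
have BT := transport_bialg HA IT Hg HgfT (@Tnr_DP _ _ D chi).
have BS := transport_bialg HA IS Hg HgfS (@Tnl_DP _ _ D chi).
have ST := transport_antipode HA IT Hg HgfT (@Tnr_DP _ _ D chi) HS.
have SS := transport_antipode HA IS Hg HgfS (@Tnl_DP _ _ D chi) HS.
split.
- by split.
- by split.
- by split; [exact: IT | exact: tau_xchi HH Hx].
- exact: IS.
split; split.
- exact: BT.
- by exists (fun v => tau chi x (Hx_S chi x (v x))).
- exact: BS.
- by exists (fun v => sigma chi (Hx_S chi x (v x)) x).
Qed.
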